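(* Let $G$ be a connected claw-free graph of order $n\ge 4$. Then $\gamma_{cI}(G)=n/2$ if and only if $G\in\Omega$.
   Context: All graphs are finite and simple; $N(v)$ is the open neighborhood of $v$. $G$ is claw-free if it has no induced subgraph isomorphic to $K_{1,3}$. For $f:V(G)\to\{0,1,2\}$ let $V_i=\{v: f(v)=i\}$ and $\omega(f)=\sum_v f(v)$. A covering Italian dominating function (CID function) of $G$ is an $f:V(G)\to\{0,1,2\}$ such that every vertex $v$ with $f(v)=0$ satisfies $\sum_{u\in N(v)}f(u)\ge 2$, and $V_0$ is an independent set. $\gamma_{cI}(G)$ is the minimum of $\omega(f)$ over all CID functions of $G$. A $k$-sun whose Hamiltonian graph is a cycle ($k\ge3$): take a cycle $v_1v_2\cdots v_kv_1$ and add $k$ new vertices $u_1,\dots,u_k$ with $u_i$ adjacent exactly to $v_i$ and $v_{i+1}$ (where $v_{k+1}=v_1$). A $k$-triangle ($k\ge1$): a path $v_1v_2\cdots v_k$ together with $k-1$ new vertices $u_1,\dots,u_{k-1}$, where $u_j$ is adjacent exactly to $v_j$ and $v_{j+1}$ (so it has $k-1$ triangles; a $1$-triangle is a single vertex). The graph $G(k_1,\dots,k_r)$: take disjoint copies of a $k_1$-triangle, a $k_2$-triangle, ..., a $k_r$-triangle, the $i$-th with path $v^i_1\cdots v^i_{k_i}$; then add $r$ new vertices $w_1,\dots,w_r$, where $w_i$ is adjacent exactly to $v^i_{k_i}$ and $v^{i+1}_1$ (indices of the triangles taken cyclically, so $w_r$ is adjacent to $v^r_{k_r}$ and $v^1_1$).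 (For example, $G(1,\dots,1)$ with $r$ entries is the cycle $C_{2r}$, and with a single entry $G(2)\cong K_4-e$.) $\Omega$ is the family of graphs $G$ that either (i) are a $k$-sun whose Hamiltonian graph is a cycle, or (ii) are of the form $G(k_1,\dots,k_r)$. *)

(* Defs.v *)
From mathcomp Require Import all_boot.
Set Implicit Arguments. Unset Strict Implicit. Unset Printing Implicit Defensive.

Section Graphs.
Variable T : finType.
Variable e : rel T.

Definition simple_graph := symmetric e /\ irreflexive e.

Definition connected_graph := forall x y : T, connect e x y.

Definition claw_free := forall v a b c : T,
  e v a -> e v b -> e v c -> a != b -> a != c -> b != c ->
  [|| e a b, e a c | e b c].

Definition is_CID (f : {ffun T -> 'I_3}) :=
  [forall v, (f v == 0 :> nat) ==> (2 <= \sum_(u | e v u) (f u : nat))] &&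
  [forall u, forall v, ((f u == 0 :> nat) && (f v == 0 :> nat)) ==> ~~ e u v].

Definition weight (f : {ffun T -> 'I_3}) := \sum_(v : T) (f v : nat).

(* minimum weight; the constant-2 function is always a CID, so 2*|V| is an upper bound *)
Definition gamma_cI :=
  \big[minn/(2 * #|T|)]_(f : {ffun T -> 'I_3} | is_CID f) weight f.
End Graphs.

Inductive lab := LV of nat & nat | LU of nat & nat | LW of nat.

(* k-sun: cycle v_0..v_{k-1} (labels LV 0 j), u_j (labels LU 0 j) adjacent to v_j, v_{j+1 mod k} *)
Definition sun_valid (k : nat) (l : lab) : bool :=
  match l with
  | LV i j => (i == 0) && (j < k)
  | LU i j => (i == 0) && (j < k)
  | LW _ => false
  end.

Definition sun_adj0 (k : nat) (a b : lab) : bool :=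
  match a, b with
  | LV _ j, LV _ j' => j' == (j.+1 %% k)
  | LU _ j, LV _ j' => (j' == j) || (j' == j.+1 %% k)
  | _, _ => false
  end.

Definition sun_adj k a b := sun_adj0 k a b || sun_adj0 k b a.

(* G(k_1,...,k_r): triangle chain i (0-based) has path LV i 0 .. LV i (k_i - 1) and
   LU i j adjacent to LV i j and LV i (j+1); LW i adjacent to LV i (k_i - 1)
   and LV ((i+1) mod r) 0. *)
Definition G_valid (ks : seq nat) (l : lab) : bool :=
  match l with
  | LV i j => (i < size ks) && (j < nth 0 ks i)
  | LU i j => (i < size ks) && (j.+1 < nth 0 ks i)
  | LW i => i < size ks
  end.

Definition G_adj0 (ks : seq nat) (a b : lab) : bool :=
  match a, b with
  | LV i j, LV i' j' => (i' == i) && (j' == j.+1)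
  | LU i j, LV i' j' => (i' == i) && ((j' == j) || (j' == j.+1))
  | LW i, LV i' j' =>
      ((i' == i) && (j' == (nth 0 ks i).-1)) ||
      ((i' == i.+1 %% size ks) && (j' == 0))
  | _, _ => false
  end.

Definition G_adj ks a b := G_adj0 ks a b || G_adj0 ks b a.

Definition iso_to (T : finType) (e : rel T) (valid : lab -> bool) (adj : lab -> lab -> bool) :=
  exists phi : T -> lab,
    [/\ injective phi, forall x, valid (phi x),
        forall l, valid l -> exists x, phi x = l
      & forall x y, e x y = adj (phi x) (phi y)].

Definition in_Omega (T : finType) (e : rel T) :=
  (exists k, 3 <= k /\ iso_to e (sun_valid k) (sun_adj k)) \/
  (exists ks : seq nat, 0 < size ks /\ all (fun k => 0 < k) ks /\
     iso_to e (G_valid ks) (G_adj ks)).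

(* Main.v *)
Require Import Defs.
From mathcomp Require Import all_boot.
From mathcomp Require Import zify.
From Stdlib Require Import ClassicalEpsilon.
Set Implicit Arguments. Unset Strict Implicit. Unset Printing Implicit Defensive.



Lemma sum_eq_termwise (I : finType) (P : pred I) (F G : I -> nat) :
  (forall i, P i -> F i <= G i) ->
  \sum_(i | P i) G i <= \sum_(i | P i) F i ->
  forall i, P i -> F i = G i.
Proof.
move=> le HS i Pi; apply/eqP; rewrite eqn_leq le //=.
apply: contraLR HS; rewrite -!ltnNge => lt.
rewrite (bigD1 i Pi) [X in _ < X](bigD1 i Pi) /=.
have : \sum_(j | P j && (j != i)) F j <= \sum_(j | P j && (j != i)) G j.
  by apply: leq_sum => j /andP[Pj _]; exact: le.
lia.
Qed.

Lemma big_min_le (I : finType) (P : pred I) (F : I -> nat) x0 i0 :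
  P i0 -> \big[minn/x0]_(i | P i) F i <= F i0.
Proof.
move=> Pi0; rewrite /index_enum; have : i0 \in Finite.enum I by rewrite -enumT mem_enum.
elim: (Finite.enum I) => [//|a r IH]; rewrite inE big_cons.
case/orP=> [/eqP<-|/IH]; first by rewrite Pi0 geq_minl.
by case: (P a) => // H; rewrite geq_min H orbT.
Qed.

Lemma card_as_sum (T : finType) (P : pred T) : #|P| = \sum_i (P i : nat).
Proof. rewrite -sum1_card big_mkcond /=; apply: eq_bigr => i _. by rewrite unfold_in; case: (P i). Qed.

Section Count.
Variables (T : finType) (e : rel T).
Hypothesis esym : symmetric e.
Hypothesis eirr : irreflexive e.
Hypothesis cf : claw_free e.
Variable f : {ffun T -> 'I_3}.
Hypothesis Hf : is_CID e f.

Definition zz v := (f v == 0 :> nat).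

Lemma CID_dom v : zz v -> 2 <= \sum_(u | e v u) f u.
Proof. by case/andP: Hf => /forallP/(_ v)/implyP H _ /H. Qed.

Lemma CID_ind u v : zz u -> zz v -> e u v = false.
Proof.
case/andP: Hf => _ /forallP/(_ u)/forallP/(_ v)/implyP H zu zv.
by apply/negbTE/H; rewrite /zz in zu zv; rewrite zu zv.
Qed.

Definition az u := #|[pred v | zz v && e v u]|.

Lemma az_le2 u : az u <= 2.
Proof.
rewrite leqNgt; apply/negP=> /card_gt2P [a [b [c [[Ha Hb Hc] [ab bc ca]]]]].
move: Ha Hb Hc; rewrite !inE => /andP[za eau] /andP[zb ebu] /andP[zc ecu].
have := cf (v:=u) (a:=a) (b:=b) (c:=c).
rewrite ![e u _]esym eau ebu ecu ab eq_sym ca bc !CID_ind //.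
by move=> /(_ isT isT isT isT isT isT).
Qed.

Lemma double_count :
  \sum_(v | zz v) \sum_(u | e v u) (f u : nat) = \sum_u (f u : nat) * az u.
Proof.
rewrite (exchange_big_dep predT) //=; apply: eq_bigr => u _.
by rewrite sum_nat_const mulnC.
Qed.

Lemma card_split : #|T| = #|[pred v | zz v]| + \sum_v (~~ zz v : nat).
Proof.
rewrite (card_as_sum [pred v | zz v]) -big_split /= -sum1_card.
by apply: eq_bigr => i _; case: (zz i).
Qed.

Lemma nz_le_w : \sum_v (~~ zz v : nat) <= \sum_v (f v : nat).
Proof. by apply: leq_sum => v _; rewrite /zz; case: (f v : nat). Qed.

Lemma chain1 : #|[pred v | zz v]|.*2 <= \sum_u (f u : nat) * az u.
Proof.
rewrite -double_count.
rewrite card_as_sum -mul2n big_distrr /= [X in _ <= X]big_mkcond /=.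
apply: leq_sum => v _; case: (boolP (zz v)) => zv /=; last by rewrite muln0.
by rewrite muln1; apply: CID_dom.
Qed.

Lemma chain2 : \sum_u (f u : nat) * az u <= (\sum_u (f u : nat)).*2.
Proof.
rewrite -mul2n big_distrr /=; apply: leq_sum => u _.
by rewrite mulnC leq_mul2r az_le2 orbT.
Qed.

Lemma Z_le_w : #|[pred v | zz v]| <= \sum_v (f v : nat).
Proof. by rewrite -leq_double (leq_trans chain1 chain2). Qed.

Lemma weight_lb : #|T| <= (weight f).*2.
Proof. by rewrite card_split /weight -addnn leq_add ?Z_le_w ?nz_le_w. Qed.

Section Eq.
Hypothesis Heq : (weight f).*2 = #|T|.

Lemma eq_Zw : #|[pred v | zz v]| = weight f /\ \sum_v (~~ zz v : nat) = weight f.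
Proof.
have := card_split; have := Z_le_w; have := nz_le_w; have := Heq; rewrite /weight.
lia.
Qed.

Lemma E1 v : (f v : nat) <= 1.
Proof.
have le : forall i, (fun _ => true) i -> (~~ zz i : nat) <= f i.
  by move=> i _; rewrite /zz; case: (f i : nat).
have := sum_eq_termwise le; case: eq_Zw => _ H.
rewrite H /weight leqnn => /(_ isT v isT).
by rewrite /zz; case: (f v : nat) => [|[]].
Qed.

Lemma E2 v : zz v -> \sum_(u | e v u) (f u : nat) = 2.
Proof.
move=> zv; symmetry.
apply: (@sum_eq_termwise _ zz (fun _ => 2) (fun v => \sum_(u | e v u) (f u : nat))) => //.
  exact: CID_dom.
rewrite double_count sum_nat_const.
have -> : #|(fun v => zz v)| = #|[pred v | zz v]| by apply: eq_card.
have := chain2; case: eq_Zw => H _; rewrite H /weight; lia.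
Qed.

Lemma E3 u : ~~ zz u -> az u = 2.
Proof.
move=> nzu.
have le : forall i, (fun _ => true) i -> (f i : nat) * az i <= (f i : nat) * 2.
  by move=> i _; rewrite leq_mul2l az_le2 orbT.
have := sum_eq_termwise le => /(_ _ u isT).
have fu : (f u : nat) = 1 by move: (E1 u) nzu; rewrite /zz; case: (f u : nat) => [|[]].
rewrite fu !mul1n; apply.
rewrite -big_distrl /=.
have := chain1; case: eq_Zw => H _; rewrite H /weight; lia.
Qed.

End Eq.
End Count.


Definition nxn n t := if t.+1 == n then 0 else t.+1.

Section Walk.
Variables (T : finType) (B : rel T).
Hypothesis Bsym : symmetric B.
Hypothesis Birr : irreflexive B.
Hypothesis Bdeg : forall x, #|[set y | B x y]| = 2.
Hypothesis Bcon : forall x y, connect B x y.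

Lemma nbr2 v a b y : B v a -> B v b -> a != b -> B v y -> (y == a) || (y == b).
Proof.
move=> Ba Bb ab By.
have E : [set a; b] = [set y | B v y].
  apply/eqP; rewrite eqEcard Bdeg cards2 ab andbT.
  by apply/subsetP=> x; rewrite !inE => /orP[]/eqP->.
have : y \in [set y | B v y] by rewrite inE.
by rewrite -E !inE.
Qed.

Lemma other_ex v p : exists y, B v y && (y != p).
Proof.
have : 1 < #|[set y | B v y]| by rewrite Bdeg.
case/card_gt1P=> x [y [Hx Hy xy]]; rewrite !inE in Hx Hy.
case: (eqVneq x p) => [xp|xp]; last by exists x; rewrite Hx.
by exists y; rewrite Hy -xp eq_sym.
Qed.

Definition other p v := odflt v [pick y | B v y && (y != p)].

Lemma other_spec p v : B v (other p v) && (other p v != p).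
Proof.
rewrite /other; case: pickP => [y //|H].
by case: (other_ex v p) => y; rewrite H.
Qed.

Variables s0 s1 : T.
Hypothesis B01 : B s0 s1.

Definition wk t := iter t (fun pr : T * T => (pr.2, other pr.1 pr.2)) (s0, s1).
Definition s t := (wk t).1.

Lemma sS t : s t.+1 = (wk t).2.
Proof. by rewrite /s /wk iterS. Qed.

Lemma sSS t : s t.+2 = other (s t) (s t.+1).
Proof. by rewrite sS sS /s /wk iterS. Qed.

Lemma Bs t : B (s t) (s t.+1).
Proof.
elim: t => [|t IH]; first by rewrite sS.
by rewrite sSS; case/andP: (other_spec (s t) (s t.+1)).
Qed.

Lemma sSS_neq t : s t.+2 != s t.
Proof. by rewrite sSS; case/andP: (other_spec (s t) (s t.+1)). Qed.

Lemma s_neqS t : s t.+1 != s t.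
Proof. by apply/eqP=> E; have := Bs t; rewrite E Birr. Qed.

Definition Prep j := [exists i : 'I_j, s i == s j].

Lemma exPrep : exists j, Prep j.
Proof.
pose g := fun i : 'I_(#|T|.+1) => s i.
have : ~~ injectiveb g.
  apply/negP=> /injectiveP/leq_card; rewrite card_ord; lia.
case/injectivePn=> a [b ab gab].
case: (ltngtP a b) => [lt|lt|E]; last by rewrite (val_inj E) eqxx in ab.
  by exists b; apply/existsP; exists (Ordinal lt); apply/eqP; exact: gab.
by exists a; apply/existsP; exists (Ordinal lt); apply/eqP; exact: (esym gab).
Qed.

Definition jj := ex_minn exPrep.

Lemma jj_spec : Prep jj /\ forall j, Prep j -> jj <= j.
Proof. by rewrite /jj; case: ex_minnP. Qed.

Lemma s_dist a b : a < jj -> b < jj -> s a = s b -> a = b.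
Proof.
wlog lt : a b / a <= b.
  by move=> W Ha Hb E; case: (leqP a b) => [|/ltnW] le; [apply W | symmetry; apply W].
move=> Ha Hb E; case: (ltngtP a b) => [ab|ab|//]; last lia.
have : Prep b by apply/existsP; exists (Ordinal ab); rewrite /= E.
by move/(proj2 jj_spec); lia.
Qed.

Lemma jj_ret : s jj = s 0.
Proof.
case: jj_spec => /existsP[[i ilt] /= /eqP Ei] _.
case: i ilt Ei => [//|i] ilt Ei.
exfalso.
have i2 : i.+2 < jj.
  case: (ltngtP i.+2 jj) => // [|E]; first lia.
  by move: (s_neqS i.+1); rewrite E Ei eqxx.
have Bi1 : B (s i.+1) (s i) by rewrite Bsym Bs.
have Bi2 : B (s i.+1) (s i.+2) by rewrite Bs.
have d : s i != s i.+2 by apply/eqP=> /s_dist; lia.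
have Bj : B (s i.+1) (s jj.-1).
  by rewrite Ei Bsym; have := Bs jj.-1; rewrite prednK //; lia.
case/orP: (nbr2 Bi1 Bi2 d Bj) => /eqP /s_dist.
  lia.
move=> H; have E : jj = i.+3 by lia.
by move: (sSS_neq i.+1); rewrite -E Ei eqxx.
Qed.

Lemma jj_ge3 : 3 <= jj.
Proof.
case: jj_spec => /existsP[[i ilt] /= /eqP Ei] _.
case: (ltngtP jj 3) => // lt.
have : jj = 1 \/ jj = 2 by lia.
case=> E.
  by move: (s_neqS 0); rewrite -E jj_ret eqxx.
by move: (sSS_neq 0); rewrite -E jj_ret eqxx.
Qed.

Definition nx t := nxn jj t.

Lemma nbr_char t y : t < jj -> B (s t) y ->
  exists t', [/\ t' < jj, y = s t' & (t' = nx t \/ t = nx t')].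
Proof.
move=> tl By; have j3 := jj_ge3.
case: t tl By => [|t] tl By.
  have B1 : B (s 0) (s 1) by apply: Bs.
  have B2 : B (s 0) (s jj.-1).
    by rewrite -jj_ret Bsym; have := Bs jj.-1; rewrite prednK //; lia.
  have d : s 1 != s jj.-1 by apply/eqP=> /s_dist; lia.
  case/orP: (nbr2 B1 B2 d By) => /eqP->.
    by exists 1; split; [lia | done | left]; rewrite /nx /nxn; case: ifP => /eqP; lia.
  by exists jj.-1; split; [lia | done | right; rewrite /nx /nxn prednK ?eqxx //; lia].
have B1 : B (s t.+1) (s t) by rewrite Bsym Bs.
have B2 : B (s t.+1) (s t.+2) by apply: Bs.
case: (ltngtP t.+2 jj) => [lt|gt|E]; last first.
- have d : s t != s 0 by apply/eqP=> /s_dist; lia.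
  have B2' : B (s t.+1) (s 0) by rewrite -jj_ret -E.
  case/orP: (nbr2 B1 B2' d By) => /eqP->.
    by exists t; split; [lia | done | right; rewrite /nx /nxn; case: ifP => /eqP; lia].
  by exists 0; split; [lia | done | left; rewrite /nx /nxn; case: ifP => /eqP; lia].
- lia.
- have d : s t != s t.+2 by apply/eqP=> /s_dist; lia.
  case/orP: (nbr2 B1 B2 d By) => /eqP->.
    by exists t; split; [lia | done | right; rewrite /nx /nxn; case: ifP => /eqP; lia].
  by exists t.+2; split; [lia | done | left]; rewrite /nx /nxn; case: ifP => /eqP; lia.
Qed.

Lemma B_nx t : t < jj -> B (s t) (s (nx t)).
Proof.
move=> tl; rewrite /nx /nxn; case: ifP => [/eqP E|_]; last exact: Bs.
by rewrite -jj_ret -E Bs.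
Qed.

Lemma S_full : [set s (nat_of_ord i) | i : 'I_jj] = [set: T].
Proof.
pose S := [set s (nat_of_ord i) | i : 'I_jj].
have clS : closed B (mem S).
  move=> x y Bxy; apply/idP/idP.
    case/imsetP=> i _ Ex; rewrite Ex in Bxy.
    have [t' [tl -> _]] := nbr_char (ltn_ord i) Bxy.
    by apply/imsetP; exists (Ordinal tl).
  case/imsetP=> i _ Ey; rewrite Ey Bsym in Bxy.
  have [t' [tl -> _]] := nbr_char (ltn_ord i) Bxy.
  by apply/imsetP; exists (Ordinal tl).
apply/setP=> x; rewrite inE.
have -> : (x \in S) = (s 0 \in S) by rewrite (closed_connect clS (Bcon (s 0) x)).
by apply/imsetP; exists (Ordinal (leq_trans (isT : 0 < 3) jj_ge3)).
Qed.

Lemma jj_card : jj = #|T|.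
Proof.
have cS : #|[set s (nat_of_ord i) | i : 'I_jj]| = jj.
  rewrite card_imset ?card_ord // => a b /s_dist H; apply: val_inj; apply: H; by [].
by rewrite -cS S_full cardsT.
Qed.

Lemma s_surj x : exists2 t, t < jj & s t = x.
Proof.
have : x \in [set s (nat_of_ord i) | i : 'I_jj] by rewrite S_full inE.
by case/imsetP=> i _ ->; exists i.
Qed.

Lemma B_walk t t' : t < jj -> t' < jj -> B (s t) (s t') = (t' == nx t) || (t == nx t').
Proof.
move=> tl tl'; apply/idP/idP.
  move=> Bt; have [u [ul E H]] := nbr_char tl Bt.
  rewrite (s_dist tl' ul E).
  by case: H => ->; rewrite eqxx ?orbT.
case/orP=> /eqP E; first by rewrite E; apply: B_nx.
by rewrite Bsym E; apply: B_nx.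
Qed.

Lemma walk_all : exists sw : nat -> T,
  [/\ sw 0 = s0 /\ sw 1 = s1,
     (forall a b, a < #|T| -> b < #|T| -> sw a = sw b -> a = b),
     (forall x, exists2 t, t < #|T| & sw t = x),
     (forall t, B (sw t) (sw t.+1)) &
     (forall t t', t < #|T| -> t' < #|T| ->
        B (sw t) (sw t') = (t' == nxn #|T| t) || (t == nxn #|T| t'))].
Proof.
exists s; rewrite -jj_card; split => //.
- exact: s_dist.
- exact: s_surj.
- exact: Bs.
- exact: B_walk.
Qed.

End Walk.


Definition hX (m : nat) (c : nat -> bool) p q := (q == p.+1 %% m) && c p.
Definition hXW (m : nat) p q := (q == p) || (p == q.+1 %% m).
Definition hadj (m : nat) (c : nat -> bool) (t t' : nat) :=
  match odd t, odd t' with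
  | false, false => hX m c t./2 t'./2 || hX m c t'./2 t./2
  | false, true => hXW m t./2 t'./2
  | true, false => hXW m t'./2 t./2
  | true, true => false
  end.

Lemma odd2 p : odd p.*2 = false. Proof. exact: odd_double. Qed.
Lemma odd2S p : odd p.*2.+1 = true. Proof. by rewrite /= odd_double. Qed.
Lemma half2 p : p.*2./2 = p. Proof. exact: doubleK. Qed.
Lemma half2S p : p.*2.+1./2 = p.
Proof. by rewrite -[p.*2.+1]/(true + p.*2) half_bit_double. Qed.

Lemma iso_compose (T : finType) (e : rel T) (valid : lab -> bool) (adj : lab -> lab -> bool)
  n (s : nat -> T) (psi : lab -> nat) (h : nat -> nat -> bool) :
  (forall a b, a < n -> b < n -> s a = s b -> a = b) ->
  (forall x, exists2 t, t < n & s t = x) ->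
  (forall a b, a < n -> b < n -> e (s a) (s b) = h a b) ->
  (forall l, valid l -> psi l < n) ->
  (forall l l', valid l -> valid l' -> psi l = psi l' -> l = l') ->
  (forall t, t < n -> exists2 l, valid l & psi l = t) ->
  (forall l l', valid l -> valid l' -> adj l l' = h (psi l) (psi l')) ->
  iso_to e valid adj.
Proof.
move=> sinj ssurj se pn pinj psurj padj.
have H : forall x, exists l, valid l /\ s (psi l) = x.
  move=> x; have [t tn <-] := ssurj x; have [l vl <-] := psurj t tn.
  by exists l.
pose phi x := proj1_sig (constructive_indefinite_description _ (H x)).
have phiP x : valid (phi x) /\ s (psi (phi x)) = x.
  by rewrite /phi; case: constructive_indefinite_description.
exists phi; split.
- move=> x y E; by rewrite -(proj2 (phiP x)) -(proj2 (phiP y)) E.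
- by move=> x; case: (phiP x).
- move=> l vl; exists (s (psi l)).
  case: (phiP (s (psi l))) => v E; apply: pinj => //.
  by apply: sinj => //; apply: pn.
- move=> x y; case: (phiP x) => vx Ex; case: (phiP y) => vy Ey.
  by rewrite -{1}Ex -{1}Ey se ?pn // padj.
Qed.

Definition psi_sun (l : lab) : nat :=
  match l with LV _ j => j.*2 | LU _ j => j.*2.+1 | LW _ => 0 end.

Lemma sun_iso (T : finType) (e : rel T) m (c : nat -> bool) (s : nat -> T) :
  3 <= m -> (forall p, p < m -> c p) ->
  (forall a b, a < m.*2 -> b < m.*2 -> s a = s b -> a = b) ->
  (forall x, exists2 t, t < m.*2 & s t = x) ->
  (forall a b, a < m.*2 -> b < m.*2 -> e (s a) (s b) = hadj m c a b) ->
  iso_to e (sun_valid m) (sun_adj m).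
Proof.
move=> m3 call sinj ssurj se.
apply: (iso_compose (psi := psi_sun) sinj ssurj se).
- by case=> i j //= /andP[_ jm]; lia.
- case=> i j // [] i' j' //= /andP[/eqP-> jm] /andP[/eqP-> jm'] E.
  + by rewrite (double_inj E).
  + by move: (congr1 odd E); rewrite odd2 odd2S.
  + by move: (congr1 odd E); rewrite odd2 odd2S.
  + by move: E => [] /double_inj ->.
- move=> t tm; case: (boolP (odd t)) => ot.
    exists (LU 0 t./2); first by rewrite /= ltn_half_double.
    by rewrite /= odd_halfK // prednK //; case: t ot tm.
  exists (LV 0 t./2); first by rewrite /= ltn_half_double.
  by rewrite /= even_halfK.
- case=> i j // [] i' j' //= /andP[_ jm] /andP[_ jm'];
    rewrite /hadj /hX /hXW ?odd2 ?odd2S ?half2 ?half2S ?call ?andbT //.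
  all: by rewrite /sun_adj /= ?orbF (eq_sym j).
Qed.
Definition st (ks : seq nat) i := sumn (take i ks).

Lemma stS ks i : i < size ks -> st ks i.+1 = st ks i + nth 0 ks i.
Proof. by move=> H; rewrite /st (take_nth 0 H) sumn_rcons. Qed.

Lemma st_le_sumn ks i : st ks i <= sumn ks.
Proof. by rewrite /st -{2}(cat_take_drop i ks) sumn_cat leq_addr. Qed.

Lemma st_mono ks i i' : i <= i' -> st ks i <= st ks i'.
Proof.
move=> le; have := st_le_sumn (take i' ks) i; by rewrite /st take_takel.
Qed.

Lemma st_lt ks i j : i < size ks -> j < nth 0 ks i -> st ks i + j < sumn ks.
Proof.
move=> il jl; have := st_le_sumn ks i.+1; rewrite stS //; lia.
Qed.

Lemma st_inj ks i j i' j' : i < size ks -> j < nth 0 ks i ->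
  i' < size ks -> j' < nth 0 ks i' -> st ks i + j = st ks i' + j' -> i = i' /\ j = j'.
Proof.
move=> il jl il' jl' E.
case: (ltngtP i i') => [lt|lt|E'].
- have := st_mono ks lt; rewrite stS //; lia.
- have := st_mono ks lt; rewrite stS //; lia.
- by subst; split => //; lia.
Qed.

Lemma st_cons k ks i : st (k :: ks) i.+1 = k + st ks i.
Proof. by []. Qed.

Lemma st0 ks : st ks 0 = 0. Proof. by rewrite /st take0. Qed.

Lemma st_surj ks p : p < sumn ks ->
  exists i j, [/\ i < size ks, j < nth 0 ks i & p = st ks i + j].
Proof.
elim: ks p => [//|k ks IH] p /= pl.
case: (ltnP p k) => pk; first by exists 0, p; rewrite st0.
have [i [j [il jl E]]] := IH (p - k) ltac:(lia).
by exists i.+1, j; split => //; rewrite st_cons; lia.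
Qed.

Lemma st_size ks : st ks (size ks) = sumn ks.
Proof. by rewrite /st take_size. Qed.

Section GIso.
Variable ks : seq nat.
Variable c : nat -> bool.
Hypothesis ks_ne : 0 < size ks.
Hypothesis ks_pos : all (fun k => 0 < k) ks.
Hypothesis cblock : forall i j, i < size ks -> j < nth 0 ks i ->
  c (st ks i + j) = (j.+1 < nth 0 ks i).

Local Notation m := (sumn ks).
Local Notation r := (size ks).
Local Notation P i j := (st ks i + j).
Local Notation k i := (nth 0 ks i).

Lemma posk i : i < r -> 0 < k i.
Proof. by move=> il; apply: (all_nthP 0 ks_pos). Qed.

Lemma Peq i j i' j' : i < r -> j < k i -> i' < r -> j' < k i' ->
  (P i j == P i' j') = (i == i') && (j == j').
Proof.
move=> il jl il' jl'; apply/eqP/andP.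
  by move/st_inj => /(_ il jl il' jl') [-> ->].
by case=> /eqP-> /eqP->.
Qed.

Lemma XX i j i' j' : i < r -> j < k i -> i' < r -> j' < k i' ->
  G_adj0 ks (LV i j) (LV i' j') = hX m c (P i j) (P i' j').
Proof.
move=> il jl il' jl' /=; rewrite /hX cblock //.
case: (ltnP j.+1 (k i)) => jk; last first.
  rewrite andbF; apply/negbTE/negP=> /andP[/eqP E /eqP E']; subst; lia.
have lt : (P i j).+1 < m by have := st_lt il jk; lia.
rewrite andbT modn_small // -addnS eq_sym Peq //.
by rewrite eq_sym (eq_sym j').
Qed.

Lemma XU i j i' j' : i < r -> j.+1 < k i -> i' < r -> j' < k i' ->
  G_adj0 ks (LU i j) (LV i' j') = hXW m (P i' j') (P i j).
Proof.
move=> il jl il' jl' /=; rewrite /hXW.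
have lt : (P i j).+1 < m by have := st_lt il jl; lia.
rewrite modn_small // -addnS !Peq //; last lia.
by rewrite (eq_sym i) (eq_sym j); case: (i' == i).
Qed.

Lemma XW i i' j' : i < r -> i' < r -> j' < k i' ->
  G_adj0 ks (LW i) (LV i' j') =
  hXW m (P i' j') (P i (k i).-1).
Proof.
move=> il il' jl' /=; rewrite /hXW.
have ki := posk il.
have E1 : (P i (k i).-1).+1 = st ks i.+1 by rewrite stS //; lia.
rewrite Peq //; last lia.
rewrite (eq_sym i) (eq_sym (k i).-1) E1; congr (_ || _).
case: (ltnP i.+1 r) => ir.
  have ki1 := posk ir.
  rewrite modn_small; last by have := st_lt ir ki1; lia.
  rewrite (modn_small (m := st ks i.+1)); last by have := st_lt ir ki1; lia.
  by rewrite -[st ks i.+1]addn0 Peq.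
have -> : i.+1 = r by lia.
rewrite modnn st_size modnn.
have := @Peq i' j' 0 0 il' jl' ks_ne (posk ks_ne).
by rewrite st0 addn0 => ->.
Qed.

Definition psi_G (l : lab) : nat :=
  match l with
  | LV i j => (P i j).*2
  | LU i j => (P i j).*2.+1
  | LW i => (P i (k i).-1).*2.+1
  end.

Lemma G_iso (T : finType) (e : rel T) (s : nat -> T) :
  (forall a b, a < m.*2 -> b < m.*2 -> s a = s b -> a = b) ->
  (forall x, exists2 t, t < m.*2 & s t = x) ->
  (forall a b, a < m.*2 -> b < m.*2 -> e (s a) (s b) = hadj m c a b) ->
  iso_to e (G_valid ks) (G_adj ks).
Proof.
move=> sinj ssurj se.
apply: (iso_compose (psi := psi_G) sinj ssurj se).
- case=> [i j|i j|i] /=.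
  + by case/andP=> il jl; have := st_lt il jl; lia.
  + by case/andP=> il jl; have := st_lt il (ltnW jl); lia.
  + by move=> il; have := posk il; have := @st_lt ks i (k i).-1 il; lia.
- have oddE : forall a b, a.*2 = b.*2.+1 -> False.
    by move=> a b /(congr1 odd); rewrite odd2 odd2S.
  have hE : forall a b, a.*2.+1 = b.*2.+1 -> a = b.
    by move=> a b /(congr1 half); rewrite !half2S.
  case=> [i j|i j|i] [i' j'|i' j'|i'] /=.
  + case/andP=> il jl /andP[il' jl'] /double_inj /st_inj.
    by case/(_ il jl il' jl') => -> ->.
  + by move=> _ _ /oddE.
  + by move=> _ _ /oddE.
  + by move=> _ _ /esym/oddE.
  + case/andP=> il jl /andP[il' jl'] /hE /st_inj.
    by case/(_ il (ltnW jl) il' (ltnW jl')) => -> ->.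
  + case/andP=> il jl il' /hE /st_inj H; have pk := posk il'.
    case: (H il (ltnW jl) il' ltac:(lia)) => E1 E2.
    by subst; lia.
  + by move=> _ _ /esym/oddE.
  + move=> il /andP[il' jl'] /hE /st_inj H; have pk := posk il.
    case: (H il ltac:(lia) il' (ltnW jl')) => E1 E2.
    by subst; lia.
  + move=> il il' /hE /st_inj H; have pk := posk il; have pk' := posk il'.
    by case: (H il ltac:(lia) il' ltac:(lia)) => ->.
- move=> t tm.
  have tE' : odd t -> t = (t./2).*2.+1.
    by move=> ot; rewrite odd_halfK // prednK //; case: t ot tm.
  have [i [j [il jl E]]] := @st_surj ks t./2 ltac:(rewrite ltn_half_double //).
  case: (boolP (odd t)) => ot; last first.
    exists (LV i j); first by rewrite /= il jl.
    by rewrite /= -E even_halfK.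
  have tE := tE' ot.
  case: (ltnP j.+1 (k i)) => jk.
    exists (LU i j); first by rewrite /= il jk.
    by rewrite /= -E.
  exists (LW i); first by [].
  by rewrite /= tE E; do 3 f_equal; lia.
- case=> [i j|i j|i] [i' j'|i' j'|i'] /=.
  + case/andP=> il jl /andP[il' jl'].
    by rewrite /G_adj /hadj !odd2 !half2 !XX.
  + case/andP=> il jl /andP[il' jl'].
    by rewrite /G_adj /hadj odd2 odd2S half2 half2S XU.
  + case/andP=> il jl il'.
    by rewrite /G_adj /hadj odd2 odd2S half2 half2S XW.
  + case/andP=> il jl /andP[il' jl'].
    by rewrite /G_adj /hadj odd2 odd2S half2 half2S XU; case: hXW.
  + case/andP=> il jl /andP[il' jl'].
    by rewrite /G_adj /hadj !odd2S.
  + case/andP=> il jl il'.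
    by rewrite /G_adj /hadj !odd2S.
  + move=> il /andP[il' jl'].
    by rewrite /G_adj /hadj odd2 odd2S half2 half2S XW; case: hXW.
  + move=> il /andP[il' jl'].
    by rewrite /G_adj /hadj !odd2S.
  + move=> il il'.
    by rewrite /G_adj /hadj !odd2S.
Qed.

End GIso.

Lemma ks_exists m (c : nat -> bool) : 0 < m -> c m.-1 = false ->
  exists ks, [/\ 0 < size ks, all (fun k => 0 < k) ks, sumn ks = m &
    forall i j, i < size ks -> j < nth 0 ks i -> c (st ks i + j) = (j.+1 < nth 0 ks i)].
Proof.
elim: m {-2}m (leqnn m) c => [|N IH] m mN c m0 cm; first lia.
have ex : exists p, ~~ c p by exists m.-1; rewrite cm.
case: (ex_minnP ex) => j0 cj0 minj.
have j0m : j0 <= m.-1 by apply: minj; rewrite cm.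
have blk0 : forall j, j < j0.+1 -> c j = (j.+1 < j0.+1).
  move=> j jl; case: (ltngtP j j0) => [lt|//|->]; last by rewrite ltnn; apply/negbTE.
    rewrite ltnS lt; apply/negPn/negP=> /minj; lia.
  lia.
case: (ltnP j0.+1 m) => km.
  have [|||ks [H1 H2 H3 H4]] := IH (m - j0.+1) _ (fun p => c (j0.+1 + p)); [lia|lia| |].
    by rewrite /= -cm; congr c; lia.
  exists (j0.+1 :: ks); split; [done | by rewrite /= H2 | by rewrite /= H3; lia | ].
  case=> [|i] j il jl.
    by rewrite st0 /= add0n blk0.
  by rewrite st_cons -addnA H4.
exists [:: m]; split; [done | by rewrite /= m0 | by rewrite /= addn0 | ].
case=> [|i] j il jl //.
rewrite st0 add0n /=; have E : m = j0.+1 by lia.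
by rewrite E; apply: blk0; move: jl; rewrite /= E.
Qed.


Lemma L_m2 m : 4 <= m.*2 -> 2 <= m. Proof. lia. Qed.
Lemma L_pred m x : x < m -> m <= x.+1 -> x = m.-1. Proof. lia. Qed.
Lemma L_modS m p : 2 <= m -> p < m -> p != p.+1 %% m.
Proof.
move=> m2 pm; case: (ltnP p.+1 m) => lt; first by rewrite modn_small // neq_ltn ltnSn.
have -> : p.+1 = m by lia.
rewrite modnn; lia.
Qed.

Lemma eqn_double a b : (a.*2 == b.*2) = (a == b).
Proof. by apply/eqP/eqP => [/double_inj|->]. Qed.

Lemma AR_mix m p q : p < m -> q < m ->
  (q.*2.+1 == nxn m.*2 p.*2) || (p.*2 == nxn m.*2 q.*2.+1) = hXW m p q.
Proof.
move=> pm qm; rewrite /nxn /hXW.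
have -> : (p.*2.+1 == m.*2) = false.
  by apply/negbTE/eqP => /(congr1 odd); rewrite odd2S odd2.
rewrite eqSS eqn_double.
case: (ltnP q.+1 m) => qm'.
  rewrite modn_small //; have -> : (q.*2.+2 == m.*2) = false by apply/eqP; lia.
  by rewrite -doubleS eqn_double.
have E : q.+1 = m by lia.
by rewrite -doubleS E eqxx modnn -[0]/(0.*2) eqn_double.
Qed.

Lemma AR_XX m p q r : hXW m p r -> hXW m q r -> p != q ->
  (q == p.+1 %% m) || (p == q.+1 %% m).
Proof.
rewrite /hXW => /orP[/eqP->|/eqP->] /orP[/eqP E|/eqP E] pq.
- by rewrite E eqxx in pq.
- by rewrite E eqxx.
- by rewrite E eqxx orbT.
- by rewrite E eqxx in pq.
Qed.

Section Struct.
Variables (T : finType) (e : rel T).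
Hypothesis esym : symmetric e.
Hypothesis eirr : irreflexive e.
Hypothesis cf : claw_free e.
Hypothesis con : connected_graph e.
Variable f : {ffun T -> 'I_3}.
Hypothesis Hf : is_CID e f.
Hypothesis Heq : (weight f).*2 = #|T|.

Local Notation z := (zz f).

Definition Bf x y := e x y && (z x != z y).

Lemma Bf_sym : symmetric Bf.
Proof. by move=> x y; rewrite /Bf esym eq_sym. Qed.

Lemma Bf_irr : irreflexive Bf.
Proof. by move=> x; rewrite /Bf eirr. Qed.

Lemma nb_nz x y : z x -> e x y -> ~~ z y.
Proof. by move=> zx exy; apply/negP=> zy; rewrite (CID_ind Hf zx zy) in exy. Qed.

Lemma Bf_e x y : Bf x y -> e x y. Proof. by case/andP. Qed.

Lemma Bf_deg x : #|[set y | Bf x y]| = 2.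
Proof.
case: (boolP (z x)) => zx.
  have -> : [set y | Bf x y] = [set y | e x y].
    apply/setP=> y; rewrite !inE /Bf zx; case: (boolP (e x y)) => //= exy.
    by rewrite eq_sym (negbTE (nb_nz zx exy)).
  rewrite -(E2 esym cf Hf Heq zx) -sum1dep_card; apply: eq_bigr => u eu.
  by have := E1 esym cf Hf Heq u; have := nb_nz zx eu; rewrite /zz; case: (f u : nat) => [|[]].
rewrite -(E3 esym cf Hf Heq zx) /az cardsE; apply: eq_card => y; rewrite !inE /Bf.
by rewrite unfold_in /= esym (negbTE zx); case: (z y); rewrite ?andbT ?andbF.
Qed.

Lemma two_Bnbrs x : exists w1 w2, [/\ Bf x w1, Bf x w2 & w1 != w2].
Proof.
have : 1 < #|[set y | Bf x y]| by rewrite Bf_deg.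
by case/card_gt1P=> w1 [w2 [H1 H2 H3]]; rewrite !inE in H1 H2; exists w1, w2.
Qed.

Lemma claw_step x y : ~~ z x -> ~~ z y -> e x y -> exists w, Bf x w && Bf w y.
Proof.
move=> zx zy exy.
have [w1 [w2 [B1 B2 w12]]] := two_Bnbrs x.
have zw : forall w, Bf x w -> z w by move=> w /andP[_]; rewrite (negbTE zx); case: (z w).
have zw1 := zw _ B1; have zw2 := zw _ B2.
have ney : forall w, z w -> w != y by move=> w zw'; apply/eqP=> E; by rewrite -E zw' in zy.
have := cf (Bf_e B1) (Bf_e B2) exy w12 (ney _ zw1) (ney _ zw2).
rewrite (CID_ind Hf zw1 zw2) /=; case/orP=> ewy.
  by exists w1; rewrite B1 /Bf ewy zw1 (negbTE zy).
by exists w2; rewrite B2 /Bf ewy zw2 (negbTE zy).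
Qed.

Lemma Bf_con x y : connect Bf x y.
Proof.
apply: (connect_sub _ (con x y)) => {}x {}y exy.
case: (boolP (z x != z y)) => d; first by apply: connect1; rewrite /Bf exy d.
have zx : ~~ z x.
  apply/negP=> zx; move: d; rewrite (negbTE (nb_nz zx exy)) zx //.
have zy : ~~ z y by move: d; rewrite (negbTE zx); case: (z y).
have [w /andP[B1 B2]] := claw_step zx zy exy.
exact: connect_trans (connect1 B1) (connect1 B2).
Qed.

Definition cfun (sw : nat -> T) m p := e (sw p.*2) (sw (p.+1 %% m).*2).

Lemma walk_struct s0 s1 : ~~ z s0 -> Bf s0 s1 ->
  exists (sw : nat -> T) m, [/\ #|T| = m.*2, sw 0 = s0 /\ sw 1 = s1,
     (forall a b, a < m.*2 -> b < m.*2 -> sw a = sw b -> a = b) /\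
     (forall x, exists2 t, t < m.*2 & sw t = x),
     (forall t, z (sw t) = odd t) &
     (forall a b, a < m.*2 -> b < m.*2 -> e (sw a) (sw b) = hadj m (cfun sw m) a b)].
Proof.
move=> nz0 B01.
have [sw [[E0 E1] sinj ssurj sB sBw]] := walk_all Bf_sym Bf_irr Bf_deg Bf_con B01.
have par : forall t, z (sw t) = odd t.
  elim=> [|t IH]; first by rewrite E0 (negbTE nz0).
  by have := sB t; rewrite /Bf IH /= => /andP[_]; case: (odd t); case: (z _).
have n0 : 0 < #|T| by apply/card_gt0P; exists s0.
have nev : ~~ odd #|T|.
  have := sBw #|T|.-1 0 ltac:(lia) n0.
  have : Bf (sw #|T|.-1) (sw 0).
    by rewrite sBw ?prednK // /nxn prednK // !eqxx.
  rewrite /Bf !par /= => /andP[_].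
  by case: #|T| n0 => // n _ /=; case: (odd n).
set m := #|T|./2.
have nE : #|T| = m.*2 by rewrite /m even_halfK.
exists sw, m; rewrite -nE; split => //.
have mix : forall p q, p < m -> q < m -> e (sw p.*2) (sw q.*2.+1) = hXW m p q.
  move=> p q pm qm; rewrite -AR_mix // -nE -sBw; try lia.
  by rewrite /Bf !par odd2 odd2S andbT.
have oo : forall p q, e (sw p.*2.+1) (sw q.*2.+1) = false.
  by move=> p q; apply: (CID_ind Hf); rewrite /zz -/(zz f _) par odd2S.
have ee : forall p q, p < m -> q < m -> e (sw p.*2) (sw q.*2) =
    hX m (cfun sw m) p q || hX m (cfun sw m) q p.
  move=> p q pm qm; apply/idP/idP => [exy|].
    have pq : p != q by apply/eqP=> E; rewrite E eirr in exy.
    have nzp : ~~ z (sw p.*2) by rewrite par odd2.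
    have nzq : ~~ z (sw q.*2) by rewrite par odd2.
    have [w /andP[B1 B2]] := claw_step nzp nzq exy.
    have [t tn Et] := ssurj w.
    have zw : z w by move: B1 => /andP[_]; rewrite (negbTE nzp); case: (z w).
    have ot : odd t by rewrite -par Et.
    have tE : t = (t./2).*2.+1 by rewrite odd_halfK // prednK //; case: t ot {tn Et}.
    have rm : t./2 < m by rewrite ltn_half_double -nE.
    have H1 : hXW m p t./2 by rewrite -mix // -tE Et (Bf_e B1).
    have H2 : hXW m q t./2 by rewrite -mix // -tE Et esym (Bf_e B2).
    case/orP: (AR_XX H1 H2 pq) => /eqP E.
      by rewrite /hX /cfun -E exy eqxx.
    by rewrite /hX /cfun -E eqxx [e (sw q.*2) _]esym exy orbT.
  case/orP=> /andP[/eqP E]; rewrite /cfun -E //.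
  by rewrite esym.
move=> a b an bn.
have [aE bE] : a = a./2.*2 + odd a /\ b = b./2.*2 + odd b.
  by split; rewrite addnC odd_double_half.
have am : a./2 < m by rewrite ltn_half_double -nE.
have bm : b./2 < m by rewrite ltn_half_double -nE.
rewrite {1}aE {1}bE /hadj.
case: (odd a); case: (odd b); rewrite ?addn1 ?addn0.
- exact: oo.
- by rewrite esym mix.
- exact: mix.
- exact: ee.
Qed.

Lemma hadj2 (c c' : nat -> bool) a b : c 0 -> c 1 -> c' 0 -> ~~ c' 1 -> a < 4 -> b < 4 ->
  hadj 2 c a b = hadj 2 c' a b.
Proof.
move=> c0 c1 c0' c1' a4 b4.
have : a \in iota 0 4 by rewrite mem_iota.
have : b \in iota 0 4 by rewrite mem_iota.
rewrite !inE => /or4P[]/eqP-> /or4P[]/eqP->;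
  by rewrite /hadj /hX /= ?c0 ?c1 ?c0' ?(negbTE c1').
Qed.

Lemma struct_Omega : 4 <= #|T| -> in_Omega e.
Proof.
move=> n4.
have [x0 nz0] : exists x, ~~ z x.
  case: (boolP [exists x, ~~ z x]) => [/existsP//|/existsPn H].
  have : weight f = 0.
    rewrite /weight big1 // => v _; move: (H v); rewrite negbK /zz => /eqP //.
  by move=> w0; move: Heq n4; rewrite w0 => <-.
case: (boolP [exists w, exists a, exists b, [&& z w, e w a, e w b, a != b & ~~ e a b]]).
  case/existsP=> w /existsP[a /existsP[b /and5P[zw ewa ewb ab nab]]].
  have nza := nb_nz zw ewa; have nzb := nb_nz zw ewb.
  have [w1 [w2 [B1 B2 w12]]] := two_Bnbrs a.
  have [s1 [Bs1 s1w]] : exists s1, Bf a s1 /\ s1 != w.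
    case: (eqVneq w1 w) => [E|]; last by exists w1.
    by exists w2; split => //; rewrite -E eq_sym.
  have [sw [m [nE [E0 E1] [sinj ssurj] par se]]] := walk_struct nza Bs1.
  have m2 : 2 <= m by apply: L_m2; rewrite -nE.
  have m0 : 0 < m by apply: leq_trans m2.
  have [t tn Et] := ssurj w.
  have ot : odd t by rewrite -par Et.
  have tE : t = (t./2).*2.+1 by rewrite odd_halfK // prednK //; case: t ot {tn Et}.
  have rm : t./2 < m by rewrite ltn_half_double.
  have H1 : hXW m 0 t./2.
    have m20 : 0 < m.*2 by rewrite double_gt0.
    have := se 0 t m20 tn.
    by rewrite E0 Et esym ewa /hadj ot /= => <-.
  have r1 : t./2 = m.-1.
    move: H1; rewrite /hXW; case/orP=> /eqP E.
      have t1 : t = 1 by rewrite tE E.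
      by move: s1w; rewrite -E1 -Et t1 eqxx.
    case: (ltnP t./2.+1 m) => lt; first by move: E; rewrite modn_small.
    exact: L_pred.
  have [u un Eu] := ssurj b.
  have ou : ~~ odd u by rewrite -par Eu.
  have uE : u = (u./2).*2 by rewrite even_halfK.
  have um : u./2 < m by rewrite ltn_half_double.
  have H2 : hXW m u./2 m.-1.
    have := se u t un tn; by rewrite Eu Et esym ewb /hadj ot (negbTE ou) r1 => <-.
  have u1 : u./2 = m.-1.
    move: H2; rewrite /hXW prednK // modnn.
    case/orP=> /eqP E //.
    by move: ab; rewrite -Eu uE E -E0 eqxx.
  have cm : cfun sw m m.-1 = false.
    rewrite /cfun prednK // modnn.
    by rewrite -u1 -uE Eu E0 esym (negbTE nab).
  have [ks [H1' H2' H3' H4']] := ks_exists (c := cfun sw m) m0 cm.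
  right; exists ks; split => //; split => //.
  apply: (G_iso H1' H2' H4' (s := sw)); rewrite H3' //.
move/existsPn=> noc.
have tri : forall w a b, z w -> e w a -> e w b -> a != b -> e a b.
  move=> w a b zw ewa ewb ab; move: (noc w) => /existsPn/(_ a)/existsPn/(_ b).
  by rewrite zw ewa ewb ab /= negbK.
have [w1 [w2 [B1 B2 w12]]] := two_Bnbrs x0.
have [sw [m [nE [E0 E1] [sinj ssurj] par se]]] := walk_struct nz0 B1.
have m2 : 2 <= m by apply: L_m2; rewrite -nE.
have m0 : 0 < m by apply: leq_trans m2.
have call : forall p, p < m -> cfun sw m p.
  move=> p pm.
  have pp : p.+1 %% m < m by rewrite ltn_mod.
  have e1 : e (sw p.*2.+1) (sw p.*2).
    by rewrite se ?ltn_double ?ltn_Sdouble // /hadj odd2 odd2S half2 half2S /hXW eqxx.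
  have e2 : e (sw p.*2.+1) (sw (p.+1 %% m).*2).
    by rewrite se ?ltn_double ?ltn_Sdouble // /hadj odd2 odd2S half2 half2S /hXW eqxx orbT.
  have ne : sw p.*2 != sw (p.+1 %% m).*2.
    apply/negP=> /eqP /sinj; rewrite !ltn_double => /(_ pm pp) /double_inj /eqP.
    by apply/negP; apply: L_modS.
  apply: (tri _ _ _ _ e1 e2 ne).
  by rewrite par odd2S.
case: (ltnP 2 m) => m3.
  left; exists m; split => //.
  by apply: (sun_iso (c := cfun sw m) m3 call sinj ssurj se).
have mE : m = 2 by apply/eqP; rewrite eqn_leq m3 m2.
pose c' := fun p : nat => p == 0.
have [ks [H1' H2' H3' H4']] := ks_exists (c := c') (isT : 0 < 2) (erefl false).
right; exists ks; split => //; split => //.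
apply: (G_iso H1' H2' H4' (s := sw)); rewrite H3' -mE //.
move=> a b an bn; rewrite se //; move: an bn; rewrite mE => an bn.
apply: hadj2 => //.
- by have := call 0; rewrite mE; apply.
- by have := call 1; rewrite mE; apply.
Qed.

End Struct.


Lemma gamma_lb (T : finType) (e : rel T) : symmetric e -> claw_free e ->
  #|T| <= (gamma_cI e).*2.
Proof.
move=> esym cf; rewrite /gamma_cI.
apply: (big_ind (fun x => #|T| <= x.*2)).
- by rewrite -mul2n; apply: leq_trans (leq_pmull _ _) (leq_pmull _ _).
- by move=> x y Hx Hy /=; case: (leqP x y).
- by move=> f Hf; apply: weight_lb esym cf f Hf.
Qed.

Lemma gamma_le (T : finType) (e : rel T) f : is_CID e f -> gamma_cI e <= weight f.
Proof. by move=> Hf; apply: big_min_le. Qed.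

Lemma gamma_att (T : finType) (e : rel T) :
  gamma_cI e = 2 * #|T| \/ exists f, is_CID e f /\ weight f = gamma_cI e.
Proof.
rewrite /gamma_cI.
apply: (big_ind (fun x => x = 2 * #|T| \/ exists f, is_CID e f /\ weight f = x)).
- by left.
- by move=> x y Hx Hy /=; case: (leqP x y).
- by move=> f Hf; right; exists f.
Qed.

Definition isLV (l : lab) := if l is LV _ _ then true else false.

Lemma omega_upper (T : finType) (e : rel T) (valid : lab -> bool) (adj : lab -> lab -> bool)
  (phi : T -> lab) :
  injective phi -> (forall x, valid (phi x)) -> (forall l, valid l -> exists x, phi x = l) ->
  (forall x y, e x y = adj (phi x) (phi y)) ->
  (forall l, valid l -> ~~ isLV l -> exists l1 l2,
     [/\ valid l1, valid l2, isLV l1 && isLV l2, l1 <> l2 & adj l l1 && adj l l2]) ->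
  (forall l l', ~~ isLV l -> ~~ isLV l' -> adj l l' = false) ->
  (exists mate : lab -> lab, forall l, valid l -> isLV l ->
     [/\ valid (mate l), ~~ isLV (mate l) &
         forall l', valid l' -> isLV l' -> mate l = mate l' -> l = l']) ->
  exists f, is_CID e f /\ (weight f).*2 <= #|T|.
Proof.
move=> pinj pval psurj padj nbrs indep [mate Hmate].
pose one : 'I_3 := Ordinal (isT : 1 < 3).
pose zero : 'I_3 := Ordinal (isT : 0 < 3).
pose f := [ffun x => if isLV (phi x) then one else zero].
have fE : forall x, (f x : nat) = isLV (phi x) by move=> x; rewrite ffunE; case: isLV.
exists f; split.
  apply/andP; split.
    apply/forallP=> v; apply/implyP; rewrite fE => H.
    have nv : ~~ isLV (phi v) by move: H; case: isLV.
    have [l1 [l2 [v1 v2 /andP[L1 L2] l12 /andP[a1 a2]]]] := nbrs _ (pval v) nv.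
    have [x1 E1] := psurj _ v1; have [x2 E2] := psurj _ v2.
    have x12 : x1 != x2 by apply/eqP=> E; apply: l12; rewrite -E1 -E2 E.
    have ex1 : e v x1 by rewrite padj E1.
    have ex2 : e v x2 by rewrite padj E2.
    rewrite (bigD1 x1) //= (bigD1 x2) /=; last by rewrite ex2 eq_sym x12.
    by rewrite !fE E1 E2 L1 L2 addnA; apply: leq_addr.
  apply/forallP=> u; apply/forallP=> v; apply/implyP=> /andP[]; rewrite !fE => Hu Hv.
  by rewrite padj indep //; [move: Hu | move: Hv]; case: isLV.
have H : forall x, exists y, isLV (phi x) -> phi y = mate (phi x).
  move=> x; case: (boolP (isLV (phi x))) => Lx; last by exists x.
  by have [v _ _] := Hmate _ (pval x) Lx; have [y Ey] := psurj _ v; exists y.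
pose g x := proj1_sig (constructive_indefinite_description _ (H x)).
have gP : forall x, isLV (phi x) -> phi (g x) = mate (phi x).
  by move=> x; rewrite /g; case: constructive_indefinite_description.
pose A := [pred x | isLV (phi x)].
have wA : weight f = #|A|.
  by rewrite /weight (card_as_sum A); apply: eq_bigr => x _; rewrite fE.
have gA : #|[set g x | x in A]| = #|A|.
  apply: card_in_imset => x y Lx Ly E.
  case: (Hmate _ (pval x) Lx) => _ _ Hi.
  have := congr1 phi E; rewrite !gP // => /Hi E'.
  by apply/pinj/E'; [exact: pval | exact: Ly].
have sub : [set g x | x in A] \subset [predC A].
  apply/subsetP=> y /imsetP[x Lx ->]; rewrite !inE gP //.
  by case: (Hmate _ (pval x) Lx).
rewrite wA -addnn -(cardC A) leq_add2l -gA.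
exact: subset_leq_card.
Qed.

Lemma sun_upper (T : finType) (e : rel T) k : 3 <= k ->
  iso_to e (sun_valid k) (sun_adj k) -> exists f, is_CID e f /\ (weight f).*2 <= #|T|.
Proof.
move=> k3 [phi [pinj pval psurj padj]].
apply: (omega_upper pinj pval psurj padj).
- case=> [i j|i j|i] //= /andP[/eqP-> jk] _.
  exists (LV 0 j), (LV 0 (j.+1 %% k)); split => //=.
  + by rewrite ltn_mod; lia.
  + by case=> /eqP; apply/negP; apply: L_modS => //; lia.
  + by rewrite /sun_adj /= !eqxx orbT.
- by case=> [i j|i j|i] [i' j'|i' j'|i'].
- exists (fun l => if l is LV i j then LU i j else l).
  case=> [i j|i j|i] //= vl _; split => //.
  by case=> [i' j'|i' j'|i'] //= _ _ [-> ->].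
Qed.

Lemma G_small (T : finType) (e : rel T) :
  iso_to e (G_valid [:: 1]) (G_adj [:: 1]) -> #|T| <= 2.
Proof.
case=> phi [pinj pval _ _].
have H : forall x, phi x = LV 0 0 \/ phi x = LW 0.
  move=> x; have := pval x; case: (phi x) => [i j|i j|i] /=.
  - move=> /andP[il jl]; left; have i0 : i = 0 by lia.
    subst i; move: jl => /= jl; have j0 : j = 0 by lia.
    by subst j.
  - move=> /andP[il jl]; have i0 : i = 0 by lia.
    by subst i; move: jl => /= jl; lia.
  - move=> il; right; have i0 : i = 0 by lia.
    by subst i.
have inj : injective (fun x => isLV (phi x)).
  move=> x y E; apply: pinj; move: E.
  by case: (H x) => ->; case: (H y) => ->.
by have := leq_card _ inj; rewrite card_bool.
Qed.

Lemma G_upper (T : finType) (e : rel T) ks : 4 <= #|T| -> 0 < size ks ->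
  all (fun k => 0 < k) ks ->
  iso_to e (G_valid ks) (G_adj ks) -> exists f, is_CID e f /\ (weight f).*2 <= #|T|.
Proof.
move=> n4 r0 kpos iso.
have posk : forall i, i < size ks -> 0 < nth 0 ks i by move=> i il; apply: (all_nthP 0 kpos).
have not1 : ~ (size ks = 1 /\ nth 0 ks 0 = 1).
  case=> s1 k1; have E : ks = [:: 1].
    by case: ks s1 k1 {r0 kpos iso posk} => [|a [|]] //= _ ->.
  by rewrite E in iso; have := G_small iso; lia.
case: iso => phi [pinj pval psurj padj].
apply: (omega_upper pinj pval psurj padj).
- case=> [i j|i j|i] //=.
  + case/andP=> il jl _.
    exists (LV i j), (LV i j.+1); split => //=.
    * by rewrite il; lia.
    * by rewrite il.
    * by case; lia.
    * by rewrite /G_adj /= !eqxx /= orbT.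
  + move=> il _.
    have ki := posk _ il.
    have ir : i.+1 %% size ks < size ks by rewrite ltn_mod.
    exists (LV i (nth 0 ks i).-1), (LV (i.+1 %% size ks) 0); split => //=.
    * by rewrite il; lia.
    * by rewrite ir posk.
    * case=> E1 E2; apply: not1.
      case: (ltnP i.+1 (size ks)) => lt.
        by move: E1; rewrite modn_small //; lia.
      have E3 : i.+1 = size ks by lia.
      move: E1; rewrite E3 modnn => E4; subst i.
      by split; lia.
    * by rewrite /G_adj /= !eqxx /= orbT.
- by case=> [i j|i j|i] [i' j'|i' j'|i'].
- exists (fun l => if l is LV i j then (if j.+1 < nth 0 ks i then LU i j else LW i) else l).
  case=> [i j|i j|i] //= /andP[il jl] _.
  case: (ltnP j.+1 (nth 0 ks i)) => jk; split => //=; rewrite ?il ?jk //.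
  + case=> [i' j'|i' j'|i'] //= /andP[il' jl'] _.
    by case: ifP => // _ [-> ->].
  + case=> [i' j'|i' j'|i'] //= /andP[il' jl'] _.
    case: ifP => // jk' [E]; subst i'; congr LV; lia.
Qed.

Theorem theorem8 (T : finType) (e : rel T) :
  simple_graph e -> connected_graph e -> claw_free e -> 4 <= #|T| ->
  (2 * gamma_cI e = #|T| <-> in_Omega e).
Proof.
move=> [esym eirr] con cf n4; split.
  move=> H; case: (gamma_att e) => [g2|[f [Hf wf]]].
    by move: H; rewrite g2; lia.
  apply: (struct_Omega esym eirr cf con Hf _ n4).
  by rewrite wf -mul2n.
move=> HO.
have lb := gamma_lb esym cf.
have [f [Hf wf]] : exists f, is_CID e f /\ (weight f).*2 <= #|T|.
  case: HO => [[k [k3 iso]]|[ks [s0 [pos iso]]]].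
    exact: sun_upper k3 iso.
  exact: G_upper n4 s0 pos iso.
have := gamma_le Hf; rewrite mul2n; lia.
Qed.
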